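(* Let $\mathcal C=(X,\{\succsim_i\}_{i\in N\cup\{A\}})$ be a collective choice problem satisfying Generic Finite Alternatives. Then the following holds if and only if $\mathcal C$ is Manipulable: for every game (amendment procedure) with at least $|X|-1$ rounds and for every initial default $x^0\in X$, in every equilibrium the implemented policy is the agenda setter's favorite policy (with probability one).
   Context: Collective choice problem: a set $N=\{1,\dots,n\}$ of voters with $n$ odd and a non-voting agenda setter $A$ choose a policy from a compact metrizable policy space $X$. Each player $i\in N\cup\{A\}$ has a complete, transitive, continuous preference $\succsim_i$ on $X$ with a continuous utility representation $u_i$. Write $x\succsim_M y$ (resp. $x\succ_M y$) if a strict majority of voters weakly (resp. strictly) prefer $x$ to $y$. $X_A^*=\arg\max_{x\in X}u_A(x)$ is the set of the agenda setter's favorite policies. A policy $x$ is Improvable if there is $y$ with $y\succ_A x$ and $y\succ_M x$, and Unimprovable otherwise. $\mathcal C$ is Manipulable if every $x\notin X_A^*$ is Improvable. $\mathcal C$ satisfies Generic Finite Alternatives if $X$ is finite and every $\succsim_i$ ($i\in N\cup\{A\}$) is antisymmetric (strict). Amendment procedure with $T$ rounds: an exogenous initial default $x^0$ is given; in each round $t=1,\dots,T$ the agenda setter proposes $a^t\in X$ (possibly equal to the default), which is put to a simultaneous vote against the current default $x^{t-1}$; if a majority of voters vote yes then $x^t=a^t$, otherwise $x^t=x^{t-1}$; the policy $x^T$ is implemented and determines payoffs. Players observe the full history of proposals and votes and may condition (possibly mixed) actions on it. Equilibrium means subgame perfect equilibrium with as-if-pivotal voting: at any history where, conditional on the proposal passing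 (resp. being rejected), the continuation outcome is $x$ (resp. $y$) irrespective of the composition of the current vote, every voter with a strict preference between $x$ and $y$ votes for the option leading to her preferred outcome. *)

(* Defs.v *)
From HB Require Import structures.
From mathcomp Require Import all_boot all_order all_algebra.
From mathcomp Require Import reals.
Set Implicit Arguments. Unset Strict Implicit. Unset Printing Implicit Defensive.
Import Order.TTheory GRing.Theory Num.Theory.
Local Open Scope ring_scope.

Section CollectiveChoice.
Variables (R : realType) (X : finType) (n : nat).

(* Voters are 'I_n; the agenda setter is separate.  Preferences are given by
   utility functions uA : X -> R (setter) and u : 'I_n -> X -> R (voters). *)

Definition strict_majority (u : 'I_n -> X -> R) (x y : X) : bool :=
  (n < 2 * #|[pred i | (u i y < u i x)%R]|)%N.

Definition favorite (uA : X -> R) (x : X) : bool := [forall y, uA y <= uA x].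

Definition improvable (uA : X -> R) (u : 'I_n -> X -> R) (x : X) : Prop :=
  exists y, uA x < uA y /\ strict_majority u y x.

Definition manipulable (uA : X -> R) (u : 'I_n -> X -> R) : Prop :=
  forall x, ~~ favorite uA x -> improvable uA u x.

(* Generic Finite Alternatives: X finite (it is a finType) and all
   preferences strict, i.e. utilities injective. *)
Definition generic_finite_alternatives (uA : X -> R) (u : 'I_n -> X -> R) : Prop :=
  injective uA /\ forall i, injective (u i).

(* vote profile: true = yes *)
Definition vote := {ffun 'I_n -> bool}.
Definition hist := seq (X * vote).

Definition passes (v : vote) : bool := (n < 2 * #|[pred j | v j]|)%N.

Definition default (x0 : X) (h : hist) : X :=
  foldl (fun x e => if passes e.2 then e.1 else x) x0 h.

(* behaviour strategy profile: the setter maps histories to a mixed proposal,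
   voter j maps (history, current proposal) to a probability of voting yes *)
Record profile := Profile {
  pA : hist -> {ffun X -> R};
  pV : 'I_n -> hist -> X -> R }.

Definition validA (f : hist -> {ffun X -> R}) : Prop :=
  forall h, (forall x, 0 <= f h x) /\ \sum_x f h x = 1.
Definition validV (g : hist -> X -> R) : Prop :=
  forall h a, 0 <= g h a <= 1.
Definition valid (s : profile) : Prop :=
  validA (pA s) /\ forall j, validV (pV s j).

Definition vprob (s : profile) (h : hist) (a : X) (v : vote) : R :=
  \prod_(j < n) (if v j then pV s j h a else 1 - pV s j h a).

(* expected value of the terminal payoff f (a function of the implemented
   policy) from history h at the start of a round, with k rounds remaining *)
Fixpoint cval (x0 : X) (s : profile) (f : X -> R) (k : nat) (h : hist) : R :=
  if k is k'.+1 then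
    \sum_(a : X) pA s h a *
      \sum_(v : vote) vprob s h a v * cval x0 s f k' (rcons h (a, v))
  else f (default x0 h).

(* expected value of f from the voting node (h, a), k rounds remaining after
   the current one *)
Definition sval (x0 : X) (s : profile) (f : X -> R) (k : nat) (h : hist) (a : X) : R :=
  \sum_(v : vote) vprob s h a v * cval x0 s f k (rcons h (a, v)).

Definition indicator (x : X) : X -> R := fun z => (z == x)%:R.

(* players: None = agenda setter, Some i = voter i *)
Definition player := option 'I_n.

Definition payoff (uA : X -> R) (u : 'I_n -> X -> R) (p : player) : X -> R :=
  match p with None => uA | Some i => u i end.

Definition unilateral (p : player) (s s' : profile) : Prop :=
  valid s' /\ (p != None -> pA s' = pA s) /\
  (forall j, p != Some j -> pV s' j = pV s j).

Definition as_if_pivotal (x0 : X) (T : nat) (u : 'I_n -> X -> R) (s : profile) : Prop :=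
  forall (h : hist) (a x y : X), (size h < T)%N ->
    (forall v, passes v -> cval x0 s (indicator x) (T - size h).-1 (rcons h (a, v)) = 1) ->
    (forall v, ~~ passes v -> cval x0 s (indicator y) (T - size h).-1 (rcons h (a, v)) = 1) ->
    forall i, (u i y < u i x -> pV s i h a = 1) /\ (u i x < u i y -> pV s i h a = 0).

(* subgame perfect equilibrium (no profitable unilateral deviation in any
   subgame: those starting at the setter's node h and those starting at the
   voting node (h, a)) with as-if-pivotal voting, in the T-round game with
   initial default x0 *)
Definition equilibrium (x0 : X) (T : nat) (uA : X -> R) (u : 'I_n -> X -> R)
    (s : profile) : Prop :=
  [/\ valid s,
      (forall (p : player) (s' : profile) (h : hist), unilateral p s s' ->
         (size h < T)%N ->
         cval x0 s' (payoff uA u p) (T - size h) h <=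
         cval x0 s (payoff uA u p) (T - size h) h),
      (forall (p : player) (s' : profile) (h : hist) (a : X), unilateral p s s' ->
         (size h < T)%N ->
         sval x0 s' (payoff uA u p) (T - size h).-1 h a <=
         sval x0 s (payoff uA u p) (T - size h).-1 h a)
    & as_if_pivotal x0 T u s].

Definition prob_favorite (x0 : X) (T : nat) (uA : X -> R) (s : profile) : R :=
  cval x0 s (fun z => (favorite uA z)%:R) T [::].

End CollectiveChoice.

(* Main.v *)
Require Import Defs.
From HB Require Import structures.
From mathcomp Require Import all_boot all_order all_algebra.
From mathcomp Require Import reals.
Set Implicit Arguments. Unset Strict Implicit. Unset Printing Implicit Defensive.
Import Order.TTheory GRing.Theory Num.Theory.
Local Open Scope ring_scope.

Section Main.
Variables (R : realType) (X : finType) (n : nat) (uA : X -> R) (u : 'I_n -> X -> R).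

Definition cand (z y : X) : bool := (y == z) || strict_majority u y z.
Definition F1 (z : X) : X := Order.arg_max z (cand z) uA.
Definition FF (k : nat) (d : X) : X := iter k F1 d.
Definition GG k d a : X :=
  if strict_majority u (FF k a) (FF k d) then FF k a else FF k d.

Lemma F1P z : cand z (F1 z) /\ forall y, cand z y -> uA y <= uA (F1 z).
Proof.
rewrite /F1; case: arg_maxP => [|i Pi Hi]; first by rewrite /cand eqxx.
by split=> // y /Hi.
Qed.

Lemma F1_ge z : uA z <= uA (F1 z).
Proof. by apply: (F1P z).2; rewrite /cand eqxx. Qed.

Lemma G_le k d a : uA (GG k d a) <= uA (FF k.+1 d).
Proof.
rewrite /GG /=; case: ifP => H; last exact: F1_ge.
by apply: (F1P _).2; rewrite /cand H orbT.
Qed.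

Lemma G_star k d : GG k d (F1 d) = FF k.+1 d.
Proof.
rewrite /GG /FF -iterSr /=.
have [] := F1P (iter k F1 d); rewrite /cand => /orP[/eqP ->|->] _ //.
by case: ifP.
Qed.

Lemma F1_strict z : manipulable uA u -> ~~ favorite uA z -> uA z < uA (F1 z).
Proof.
move=> man /man [y [lt sm]]; apply: (lt_le_trans lt).
by apply: (F1P z).2; rewrite /cand sm orbT.
Qed.

Hypothesis injA : injective uA.

Lemma F1_fav z : favorite uA z -> F1 z = z.
Proof.
move=> /forallP fz; apply: injA; apply/eqP; rewrite eq_le F1_ge andbT.
exact: fz.
Qed.

Lemma F1_unimp z : ~ improvable uA u z -> F1 z = z.
Proof.
move=> nimp; have [] := F1P z; rewrite /cand => /orP[/eqP -> //|sm] _.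
exfalso; apply: nimp; exists (F1 z); split=> //.
rewrite lt_neqAle F1_ge andbT; apply/negP => /eqP /injA E.
move: sm; rewrite -E /strict_majority (@eq_card _ _ pred0) ?card0 ?muln0 //.
by move=> i; rewrite !inE /= ltxx.
Qed.

Lemma FF_unimp z k : ~ improvable uA u z -> FF k z = z.
Proof. by move=> nimp; elim: k => //= k; rewrite /FF /= => ->; apply: F1_unimp. Qed.

Lemma FF_rank k d : manipulable uA u ->
  favorite uA (FF k d) \/ (k <= #|[pred x | (uA x < uA (FF k d))%R]|)%N.
Proof.
move=> man; elim: k => [|k IH]; first by right.
rewrite /FF iterS -/(FF k d).
have [fz|nfz] := boolP (favorite uA (FF k d)).
  by left; rewrite F1_fav.
right; case: IH => [fz|IH]; first by rewrite fz in nfz.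
have lt := F1_strict man nfz.
apply: (@leq_trans (#|[predU1 FF k d & [pred x | uA x < uA (FF k d)]]|)).
  by rewrite cardU1 inE ltxx add1n ltnS.
apply: subset_leq_card; apply/subsetP => x; rewrite !inE => /orP[/eqP ->//|].
by move=> H; apply: lt_trans lt.
Qed.

Lemma FF_fav T d : manipulable uA u -> (#|X| - 1 <= T)%N -> favorite uA (FF T d).
Proof.
move=> man HT; case: (FF_rank T d man) => // Hk.
set z := FF T d in Hk *.
set A := [pred x | uA x < uA z] in Hk.
have sub : A \subset predC1 z by apply/subsetP => x; rewrite !inE; apply: contraTneq => ->; rewrite ltxx.
have cA : #|A| = #|predC1 z|.
  apply/eqP; rewrite eqn_leq subset_leq_card //= cardC1.
  by apply: leq_trans Hk; rewrite -subn1.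
have /subset_cardP := cA; move=> /(_ sub) eqA.
apply/forallP => y; have [->//|ne] := eqVneq y z.
have : y \in predC1 z by rewrite !inE ne.
by rewrite -eqA inE => /ltW.
Qed.

Lemma default_rcons x0 (h : hist X n) a v :
  default x0 (rcons h (a, v)) = if passes v then a else default x0 h.
Proof. by rewrite /default foldl_rcons. Qed.

Lemma sum_le_cst (I : finType) (p g : I -> R) c :
  (forall i, 0 <= p i) -> \sum_i p i = 1 -> (forall i, p i != 0 -> g i <= c) ->
  \sum_i p i * g i <= c.
Proof.
move=> p0 p1 Hg; apply: (@le_trans _ _ (\sum_i p i * c)).
  apply: ler_sum => i _; have [->|nz] := eqVneq (p i) 0; first by rewrite !mul0r.
  by apply: ler_wpM2l => //; apply: Hg.
by rewrite -big_distrl /= p1 mul1r.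
Qed.

Lemma sum_eq_cst (I : finType) (p g : I -> R) c :
  \sum_i p i = 1 -> (forall i, p i != 0 -> g i = c) ->
  \sum_i p i * g i = c.
Proof.
move=> p1 Hg; rewrite (eq_bigr (fun i => p i * c)); first by rewrite -big_distrl /= p1 mul1r.
by move=> i _; have [->|nz] := eqVneq (p i) 0; rewrite ?mul0r // Hg.
Qed.

Lemma vprob_ge0 (s : profile R X n) h a v :
  (forall j, 0 <= pV s j h a <= 1) -> 0 <= vprob s h a v.
Proof.
move=> Hp; apply: prodr_ge0 => j _; case: (v j); have /andP[] := Hp j => // _.
by rewrite subr_ge0.
Qed.

Lemma vprob_sum (s : profile R X n) h a :
  \sum_(v : vote n) vprob s h a v = 1.
Proof.
rewrite /vprob.
have := (@bigA_distr_bigA R 0 1 *%R +%R 'I_n bool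
   (fun j b => if b then pV s j h a else 1 - pV s j h a)).
move=> <-; apply: big1 => j _.
by rewrite big_bool /= addrC subrK.
Qed.

Lemma vprob0 (s : profile R X n) h a (v : vote n) j (b : bool) :
  pV s j h a = b%:R -> v j != b -> vprob s h a v = 0.
Proof.
move=> Hp ne; rewrite /vprob (bigD1 j) //= Hp.
by move: ne Hp; case: (v j); case: b => //= _ _; rewrite ?subrr mul0r.
Qed.

Lemma vprob_det (s : profile R X n) h a (b : 'I_n -> bool) :
  (forall j, pV s j h a = (b j)%:R) ->
  forall v, vprob s h a v = (v == [ffun j => b j])%:R.
Proof.
move=> Hp v; have [->|ne] := eqVneq v [ffun j => b j].
  rewrite /vprob big1 // => j _; rewrite Hp ffunE; by case: (b j); rewrite ?subr0.
have [j nej] : exists j, v j != b j.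
  apply/existsP; apply: contraR ne; rewrite negb_exists => /forallP H.
  by apply/eqP/ffunP => j; rewrite ffunE; apply/eqP; have := H j; rewrite negbK.
exact: vprob0 (Hp j) nej.
Qed.

Lemma passes_mono (v w : vote n) : (forall j, v j -> w j) -> passes v -> passes w.
Proof.
move=> Hvw; rewrite /passes => H; apply: (leq_trans H); rewrite leq_mul2l; apply/orP; right.
by apply: subset_leq_card; apply/subsetP => j; rewrite !inE; apply: Hvw.
Qed.

Lemma passes_star (x y : X) :
  passes [ffun j => (u j y < u j x)%R] = strict_majority u x y.
Proof.
by rewrite /passes /strict_majority; congr (_ < _ * _)%N; apply: eq_card => j; rewrite !inE /= ffunE.
Qed.

Lemma cval_agree x0 (s s' : profile R X n) m f :
  (forall h, (m <= size h)%N -> pA s' h = pA s h /\ forall j, pV s' j h = pV s j h) ->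
  forall k h, (m <= size h)%N -> cval x0 s' f k h = cval x0 s f k h.
Proof.
move=> Hag; elim=> [//|k IH] h Hh /=.
have [E1 E2] := Hag h Hh.
apply: eq_bigr => a _; rewrite E1; congr (_ * _); apply: eq_bigr => v _.
rewrite IH ?size_rcons ?(leq_trans Hh) //; congr (_ * _).
by rewrite /vprob; apply: eq_bigr => j _; rewrite E2.
Qed.

Lemma sval_step x0 (s : profile R X n) h k a f :
  (forall v f, cval x0 s f k (rcons h (a, v)) = f (FF k (default x0 (rcons h (a, v))))) ->
  (FF k a != FF k (default x0 h) ->
     forall j, pV s j h a = ((u j (FF k (default x0 h)) < u j (FF k a))%R)%:R) ->
  Defs.sval x0 s f k h a = f (GG k (default x0 h) a).
Proof.
move=> IH HV; rewrite /Defs.sval.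
under eq_bigr do rewrite IH default_rcons.
set d := default x0 h.
have [E|ne] := eqVneq (FF k a) (FF k d).
  rewrite (eq_bigr (fun v => vprob s h a v * f (FF k d))).
    by rewrite -big_distrl /= vprob_sum mul1r /GG E; case: ifP.
  by move=> v _; case: ifP => //; rewrite E.
have Hd := vprob_det (HV ne).
rewrite (bigD1 [ffun j => (u j (FF k d) < u j (FF k a))%R]) //= Hd eqxx mul1r.
rewrite big1 ?addr0; last by move=> v /negbTE nv; rewrite Hd nv mul0r.
by rewrite passes_star /GG; case: ifP.
Qed.

Lemma cval_step x0 (s : profile R X n) h k f :
  valid s ->
  (forall a f, Defs.sval x0 s f k h a = f (GG k (default x0 h) a)) ->
  (forall a, pA s h a != 0 -> GG k (default x0 h) a = FF k.+1 (default x0 h)) ->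
  cval x0 s f k.+1 h = f (FF k.+1 (default x0 h)).
Proof.
move=> [vA _] Hs HA.
change (\sum_a pA s h a * Defs.sval x0 s f k h a = f (FF k.+1 (default x0 h))).
apply: sum_eq_cst; first by case: (vA h).
by move=> a nz; rewrite Hs HA.
Qed.

Definition sA (x0 : X) (T : nat) : profile R X n :=
  Profile (fun h => [ffun a => (a == F1 (default x0 h))%:R])
          (fun i h a => ((u i (FF (T - size h).-1 (default x0 h)) < u i (FF (T - size h).-1 a))%R)%:R).

Lemma delta_validA (c : X) : (forall a, 0 <= [ffun b => (b == c)%:R] a :> R) /\
   \sum_a [ffun b => (b == c)%:R] a = 1 :> R.
Proof.
split=> [a|]; first by rewrite ffunE ler0n.
rewrite (bigD1 c) //= ffunE eqxx big1 ?addr0 // => a /negbTE na.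
by rewrite ffunE na.
Qed.

Lemma sA_valid x0 T : valid (sA x0 T).
Proof.
split; first by move=> h; apply: delta_validA.
by move=> j h a /=; case: (_ < _)%R; rewrite /= ?lexx ?ler01.
Qed.

Lemma Ek T (h : hist X n) k : (size h + k.+1 = T)%N -> (T - size h).-1 = k.
Proof. by move<-; rewrite addKn. Qed.

Lemma sA_eval x0 T k h : (size h + k = T)%N ->
  forall f, cval x0 (sA x0 T) f k h = f (FF k (default x0 h)).
Proof.
elim: k h => [|k IH] h Hs f; first by [].
apply: cval_step; first exact: sA_valid.
  move=> a g; apply: sval_step.
    by move=> v g'; apply: IH; rewrite size_rcons addSnnS.
  by move=> _ j /=; rewrite (Ek Hs).
move=> a /=; rewrite ffunE; case: (eqVneq a (F1 (default x0 h))) => [-> _|].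
  by rewrite G_star.
by move=> _; rewrite ?mulr0n eqxx.
Qed.

Lemma sA_devV x0 T p (s' : profile R X n) h k a :
  unilateral p (sA x0 T) s' -> (size h + k.+1 = T)%N ->
  (forall h', (size h' + k = T)%N ->
     cval x0 s' (payoff uA u p) k h' <= payoff uA u p (FF k (default x0 h'))) ->
  Defs.sval x0 s' (payoff uA u p) k h a <= payoff uA u p (GG k (default x0 h) a).
Proof.
move=> [[vA' vV'] [HpA HpV]] Hs IH.
set d := default x0 h.
set b := fun j => (u j (FF k d) < u j (FF k a))%R.
have Hb : forall j, p != Some j -> pV s' j h a = (b j)%:R.
  by move=> j /HpV ->; rewrite /= (Ek Hs).
rewrite /Defs.sval.
apply: (@le_trans _ _ (\sum_v vprob s' h a v * payoff uA u p (FF k (if passes v then a else d)))).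
  apply: ler_sum => v _; apply: ler_wpM2l; first by apply: vprob_ge0 => j; apply: vV'.
  by rewrite -default_rcons; apply: IH; rewrite size_rcons addSnnS.
apply: sum_le_cst; [by move=> v; apply: vprob_ge0 => j; apply: vV' | exact: vprob_sum |].
move=> v nz.
have Hv : forall j, p != Some j -> v j = b j.
  move=> j pj; apply/eqP; apply: contraNT nz => ne; apply/eqP; exact: vprob0 (Hb j pj) ne.
have -> : GG k d a = FF k (if passes [ffun j => b j] then a else d).
  by rewrite passes_star /GG; case: ifP.
case: p Hb Hv {HpA HpV IH} => [i|] Hb Hv /=; last first.
  have -> : v = [ffun j => b j] by apply/ffunP => j; rewrite ffunE; apply: Hv.
  exact: lexx.
case Pv: (passes v); case Ps: (passes [ffun j => b j]) => //=.
- case Bi: (b i); last by rewrite leNgt; move: Bi; rewrite /b => ->.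
  exfalso; move: Ps; rewrite (passes_mono _ Pv) // => j; rewrite ffunE.
  have [->|ne] := eqVneq j i; first by rewrite Bi.
  by rewrite Hv // eq_sym; apply/negP => /eqP [] /eqP; rewrite (negbTE ne).
- case Bi: (b i); first by apply: ltW.
  exfalso; move: Pv; rewrite (passes_mono _ Ps) // => j; rewrite ffunE.
  have [->|ne] := eqVneq j i; first by rewrite Bi.
  by rewrite Hv // eq_sym; apply/negP => /eqP [] /eqP; rewrite (negbTE ne).
Qed.

Lemma sA_dev x0 T p (s' : profile R X n) k h :
  unilateral p (sA x0 T) s' -> (size h + k = T)%N ->
  cval x0 s' (payoff uA u p) k h <= payoff uA u p (FF k (default x0 h)).
Proof.
move=> Hu; elim: k h => [|k IH] h Hs; first exact: lexx.
have [[vA' vV'] [HpA HpV]] := Hu.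
change (\sum_a pA s' h a * Defs.sval x0 s' (payoff uA u p) k h a <=
        payoff uA u p (FF k.+1 (default x0 h))).
apply: (@le_trans _ _ (\sum_a pA s' h a * payoff uA u p (GG k (default x0 h) a))).
  apply: ler_sum => a _; apply: ler_wpM2l; first by case: (vA' h).
  exact: (@sA_devV x0 T p s' h k a Hu Hs IH).
apply: sum_le_cst; [by case: (vA' h) | by case: (vA' h) | ].
move=> a nz; case: p Hu HpA HpV IH => [i|] Hu HpA HpV IH /=; last exact: G_le.
rewrite HpA // in nz; move: nz; rewrite /= ffunE.
case: (eqVneq a (F1 (default x0 h))) => [-> _|]; first by rewrite G_star.
by move=> _; rewrite ?mulr0n eqxx.
Qed.

Lemma passes_all : (0 < n)%N -> passes ([ffun=> true] : vote n).
Proof.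
move=> n0; rewrite /passes (@eq_card _ _ predT); last by move=> j; rewrite !inE ffunE.
by rewrite cardT size_enum_ord mul2n -addnn -{1}(addn0 n) ltn_add2l.
Qed.

Lemma passes_none : ~~ passes ([ffun=> false] : vote n).
Proof.
rewrite /passes (@eq_card _ _ pred0) ?card0 ?muln0 //.
by move=> j; rewrite !inE ffunE.
Qed.

Lemma indicator1 (x y : X) : @indicator R X x y = 1 -> y = x.
Proof.
by rewrite /indicator; case: eqP => // _ /eqP; rewrite eq_sym oner_eq0.
Qed.

Lemma sA_eq x0 T : (0 < n)%N -> equilibrium x0 T uA u (sA x0 T).
Proof.
move=> n0; split.
- exact: sA_valid.
- move=> p s' h Hu Hh.
  have Hs : (size h + (T - size h) = T)%N by rewrite subnKC // ltnW.
  by rewrite (@sA_eval x0 T _ h Hs); apply: (sA_dev Hu Hs).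
- move=> p s' h a Hu Hh.
  have Hs : (size h + (T - size h).-1.+1 = T)%N.
    by rewrite prednK ?subn_gt0 // subnKC // ltnW.
  apply: (le_trans (@sA_devV x0 T p s' h _ a Hu Hs (fun h' Hs' => sA_dev Hu Hs'))).
  have -> // : Defs.sval x0 (sA x0 T) (payoff uA u p) (T - size h).-1 h a =
     payoff uA u p (GG (T - size h).-1 (default x0 h) a).
  apply: sval_step.
    by move=> v g; apply: sA_eval; rewrite size_rcons addSnnS.
  by move=> _ j /=.
- move=> h a x y Hh Hp Hf i.
  have Hs : (size h + (T - size h).-1.+1 = T)%N.
    by rewrite prednK ?subn_gt0 // subnKC // ltnW.
  set k := (T - size h).-1 in Hp Hf Hs *.
  have Ex : FF k a = x.
    have := Hp _ (passes_all n0).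
    rewrite sA_eval ?size_rcons ?addSnnS // default_rcons passes_all //.
    exact: indicator1.
  have Ey : FF k (default x0 h) = y.
    have := Hf _ passes_none.
    rewrite sA_eval ?size_rcons ?addSnnS // default_rcons (negbTE passes_none).
    exact: indicator1.
  rewrite /= -/k Ex Ey; split=> H; first by rewrite H.
  by rewrite lt_gtF.
Qed.

Lemma eq_eval x0 T (s : profile R X n) :
  (forall i, injective (u i)) -> equilibrium x0 T uA u s ->
  forall k h, (size h + k = T)%N -> forall f, cval x0 s f k h = f (FF k (default x0 h)).
Proof.
move=> inju [vs Hdev _ Hpiv]; have [vA vV] := vs.
elim=> [|k IH] h Hs f; first by [].
set d := default x0 h.
have Hh : (size h < T)%N by rewrite -Hs addnS ltnS leq_addr.
have Ek' := Ek Hs.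
have IH' : forall a v g, cval x0 s g k (rcons h (a, v)) = g (FF k (default x0 (rcons h (a, v)))).
  by move=> a v g; apply: IH; rewrite size_rcons addSnnS.
have Hsv : forall a g, Defs.sval x0 s g k h a = g (GG k d a).
  move=> a g; apply: sval_step; first exact: IH'.
  move=> ne j.
  have Hp : forall v, passes v -> cval x0 s (@indicator R X (FF k a)) (T - size h).-1 (rcons h (a, v)) = 1.
    by move=> v Pv; rewrite Ek' IH' default_rcons Pv /indicator eqxx.
  have Hf : forall v, ~~ passes v -> cval x0 s (@indicator R X (FF k d)) (T - size h).-1 (rcons h (a, v)) = 1.
    by move=> v Pv; rewrite Ek' IH' default_rcons (negbTE Pv) /indicator eqxx.
  have [Hy Hx] := Hpiv h a (FF k a) (FF k d) Hh Hp Hf j.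
  case: (ltgtP (u j (FF k d)) (u j (FF k a))) => H; first by rewrite Hy.
    by rewrite Hx.
  by move/inju: H => H; rewrite H eqxx in ne.
apply: cval_step => // a nzA.
pose s' := Profile (fun h' => if h' == h then [ffun b => (b == F1 d)%:R] else pA s h') (pV s).
have Hu : unilateral None s s'.
  split; last by split.
  split; last exact: vV.
  by move=> h'; rewrite /s' /=; case: eqP => _; [apply: delta_validA | apply: vA].
have := Hdev None s' h Hu Hh.
have Ek2 : (T - size h = k.+1)%N by rewrite -Hs addKn.
rewrite Ek2.
change (\sum_b pA s' h b * Defs.sval x0 s' uA k h b <= \sum_b pA s h b * Defs.sval x0 s uA k h b -> GG k d a = FF k.+1 d).
have -> : \sum_b pA s' h b * Defs.sval x0 s' uA k h b = uA (FF k.+1 d).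
  rewrite /= eqxx (bigD1 (F1 d)) //= ffunE eqxx mul1r big1 ?addr0; last first.
    by move=> b /negbTE nb; rewrite ffunE nb mul0r.
  rewrite -[F1 (FF k d)]/(FF k.+1 d) -G_star -Hsv /Defs.sval; apply: eq_bigr => v _; congr (_ * _).
  apply: (@cval_agree x0 s s' (size h).+1) => [h' Hh'|]; last by rewrite size_rcons.
  rewrite /= ifN //; apply/negP => /eqP E; by rewrite E ltnn in Hh'.
under [X in _ <= X -> _]eq_bigr do rewrite Hsv.
move=> Hle.
have Hsum : \sum_b pA s h b * (uA (FF k.+1 d) - uA (GG k d b)) = 0.
  apply/eqP; rewrite eq_le; apply/andP; split.
    under eq_bigr do rewrite mulrBr.
    by rewrite sumrB -big_distrl /= (vA h).2 mul1r subr_le0.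
  by apply: sumr_ge0 => b _; apply: mulr_ge0; [apply: (vA h).1 | rewrite subr_ge0 G_le].
have Hge : forall b, true -> 0 <= pA s h b * (uA (FF k.+1 d) - uA (GG k d b)).
  by move=> b _; apply: mulr_ge0; [apply: (vA h).1 | rewrite subr_ge0 G_le].
have /eqP := @psumr_eq0P _ _ _ _ Hge Hsum a isT.
rewrite mulf_eq0 (negbTE nzA) /= subr_eq0 => /eqP /injA E.
by rewrite -E.
Qed.

End Main.

Theorem theorem1 (R : realType) (X : finType) (n : nat)
    (uA : X -> R) (u : 'I_n -> X -> R) :
  odd n ->
  generic_finite_alternatives uA u ->
  (forall (T : nat) (x0 : X) (s : profile R X n),
      (#|X| - 1 <= T)%N ->
      equilibrium x0 T uA u s ->
      prob_favorite x0 T uA s = 1)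
  <-> manipulable uA u.
Proof.
move=> odd_n [injA inju]; have n0 : (0 < n)%N by rewrite odd_gt0.
split.
- move=> HL x nfx.
  case E: [exists y, (uA x < uA y) && strict_majority u y x].
    by case/existsP: E => y /andP[lt sm]; exists y.
  exfalso.
  have nimp : ~ improvable uA u x.
    by move=> [y [lt sm]]; move/negbT: E => /existsPn /(_ y); rewrite lt sm.
  have Heq := @sA_eq R X n uA u x (#|X| - 1) n0.
  have := HL _ x _ (leqnn _) Heq.
  rewrite /prob_favorite (@sA_eval R X n uA u x (#|X| - 1) (#|X| - 1) [::]) //.
  rewrite (FF_unimp injA _ nimp) (negbTE nfx) => /eqP.
  by rewrite eq_sym oner_eq0.
- move=> man T x0 s HT Heq.
  rewrite /prob_favorite (@eq_eval R X n uA u injA x0 T s inju Heq T [::]) //.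
  by rewrite FF_fav.
Qed.
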